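(* Let $K_1,K_2$ be finite simplicial complexes on disjoint vertex sets, $k\ge 2$, and $K=K_1\vee_kK_2$ a $k$-wedge sum. If $0\le i\le k-2$, then $B_i(K)$ is unbalanced.
   Context: $S_j(K)$ is the set of faces of cardinality $j+1$. The $k$-wedge sum $K_1\vee_kK_2$ is obtained from $K_1\cup K_2$ by identifying a $k$-face $\{v_0,\dots,v_k\}$ of $K_1$ with a $k$-face $\{u_0,\dots,u_k\}$ of $K_2$ via $v_j\mapsto u_j$. For an oriented complex $K$, $B_i(K)$ is the signed bipartite graph on $S_i(K)\cup S_{i+1}(K)$ with edges $\{G,\bar G\}$ for $G\subset\bar G$, signed by the boundary incidence sign $\mathrm{sgn}([G],\partial[\bar G])\in\{\pm1\}$ ($(-1)^j$ if $G$ is $\bar G$ minus its $j$-th vertex with agreeing orientation, negated otherwise). A signed graph is balanced if every cycle has positive sign product. *)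

(* Defs.v *)
From mathcomp Require Import all_boot all_order all_algebra.
Set Implicit Arguments. Unset Strict Implicit. Unset Printing Implicit Defensive.
Import GRing.Theory.
Local Open Scope ring_scope.

Definition simplicial_complex (V : finType) (K : {set {set V}}) : Prop :=
  forall F G : {set V}, F \in K -> G \subset F -> G \in K.

Definition S_ (V : finType) (K : {set {set V}}) (j : nat) : {set {set V}} :=
  [set F in K | #|F| == j.+1]%N.

(* k-wedge sum, up to the naming of vertices: W contains copies phi1(V1),
   phi2(V2) which meet exactly in phi1(s1) = phi2(s2), where s1, s2 are
   k-faces of K1, K2 (the identification v_j |-> u_j is u_j = phi2^-1(phi1 v_j)),
   and K is the union of the images of K1 and K2. *)
Definition k_wedge_sum (V1 V2 W : finType) (k : nat)
    (K1 : {set {set V1}}) (K2 : {set {set V2}}) (K : {set {set W}}) : Prop :=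
  exists (phi1 : V1 -> W) (phi2 : V2 -> W) (s1 : {set V1}) (s2 : {set V2}),
    [/\ injective phi1, injective phi2,
        s1 \in S_ K1 k & s2 \in S_ K2 k] /\
    [/\ phi1 @: s1 = phi2 @: s2,
        (forall x y, phi1 x = phi2 y -> x \in s1) &
        K = ((fun F : {set V1} => phi1 @: F) @: K1) :|: ((fun G : {set V2} => phi2 @: G) @: K2)].

(* Vertices are compared via enum_rank; the standard orientation
   of a face lists its vertices increasingly.  An arbitrary orientation of the
   complex is given by eps : {set V} -> bool (eps F = true iff the orientation
   of F is opposite to the standard one). *)
Definition pos_in (V : finType) (F : {set V}) (v : V) : nat :=
  #|[set u in F | (enum_rank u < enum_rank v)%N]|.

(* sgn([G], boundary [Gb]) for G = Gb minus one vertex v: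
   (-1)^j with j the position of v in Gb, corrected by the orientations. *)
Definition incidence_sign (V : finType) (eps : {set V} -> bool)
    (G Gb : {set V}) : int :=
  (-1) ^+ (eps G + eps Gb +
           (if [pick v in Gb :\: G] is Some v then pos_in Gb v else 0))%N.

Definition cycle_sign (T : eqType) (sgn : T -> T -> int) (c : seq T) : int :=
  \prod_(p <- zip c (rot 1 c)) sgn p.1 p.2.

Definition balanced (T : eqType) (adj : rel T) (sgn : T -> T -> int) : Prop :=
  forall c : seq T, uniq c -> (3 <= size c)%N -> cycle adj c ->
    cycle_sign sgn c = 1.

Definition B_adj (V : finType) (K : {set {set V}}) (i : nat) : rel {set V} :=
  fun x y =>
    ((x \in S_ K i) && (y \in S_ K i.+1) && (x \subset y)) ||
    ((y \in S_ K i) && (x \in S_ K i.+1) && (y \subset x)).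

Definition B_sign (V : finType) (eps : {set V} -> bool) (x y : {set V}) : int :=
  if (#|x| < #|y|)%N then incidence_sign eps x y else incidence_sign eps y x.

Definition B_balanced (V : finType) (K : {set {set V}}) (i : nat)
    (eps : {set V} -> bool) : Prop :=
  balanced (B_adj K i) (B_sign eps).

(* Main.v *)
Require Import Defs.
From mathcomp Require Import all_boot all_order all_algebra.
From Stdlib Require Import Lia.
From mathcomp Require Import zify.
Set Implicit Arguments. Unset Strict Implicit. Unset Printing Implicit Defensive.
Import GRing.Theory.

Section Aux.
Variable W : finType.

Lemma pos_U1 (T : {set W}) v u : v \notin T ->
  pos_in (v |: T) u = (pos_in T u + (enum_rank v < enum_rank u))%N.
Proof.
move=> vT; rewrite /pos_in.
set S := [set w in T | _].
have vS : v \notin S by rewrite inE (negbTE vT).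
case Hv: (enum_rank v < enum_rank u)%N.
- have ->: [set w in v |: T | (enum_rank w < enum_rank u)%N] = v |: S.
    by apply/setP=> w; rewrite !inE; case: eqP => [->|] //=; rewrite Hv.
  by rewrite cardsU1 vS addnC.
- have ->: [set w in v |: T | (enum_rank w < enum_rank u)%N] = S.
    by apply/setP=> w; rewrite !inE; case: eqP => [->|] //=; rewrite Hv andbF.
  by rewrite addn0.
Qed.

Lemma inc_U1 (eps : {set W} -> bool) (S : {set W}) x : x \notin S ->
  incidence_sign eps S (x |: S) =
  ((-1) ^+ (eps S + eps (x |: S) + pos_in (x |: S) x)%N)%R.
Proof.
move=> xS; rewrite /incidence_sign.
have ->: (x |: S) :\: S = [set x].
  apply/setP=> w; rewrite !inE; case: eqP => [->|] /=.
    by rewrite (negbTE xS).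
  by case: (w \in S).
case: pickP => [v|]; first by rewrite inE => /eqP ->.
by move/(_ x); rewrite inE eqxx.
Qed.

Lemma rk_swap (x y : W) : x != y ->
  (enum_rank y < enum_rank x)%N = ~~ (enum_rank x < enum_rank y)%N.
Proof.
move=> xy; rewrite ltnNge leq_eqVlt; congr (~~ _).
have -> : (nat_of_ord (enum_rank x) == enum_rank y) = false => //.
apply/negbTE; apply: contra xy => /eqP /val_inj /enum_rank_inj ->. by [].
Qed.

Lemma ex_sub (S : {set W}) n : (n <= #|S|)%N -> exists A : {set W}, A \subset S /\ #|A| = n.
Proof.
elim: n => [|n IH] lt; first by exists set0; rewrite sub0set cards0.
have [A [AS cA]] := IH (ltnW lt).
have : (0 < #|S :\: A|)%N by rewrite cardsD (setIidPr AS) cA subn_gt0.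
case/card_gt0P => x; rewrite inE => /andP [xA xS].
exists (x |: A); rewrite cardsU1 xA cA; split => //.
by rewrite subUset sub1set xS AS.
Qed.

Lemma swapU (x y : W) (S : {set W}) : x |: (y |: S) = y |: (x |: S).
Proof. by rewrite setUCA. Qed.

Lemma inc2 eps (A : {set W}) x y : x \notin A -> y \notin A -> x != y ->
  incidence_sign eps (y |: A) (x |: (y |: A)) =
  ((-1) ^+ (eps (y |: A) + eps (x |: (y |: A)) +
     (pos_in A x + (enum_rank y < enum_rank x)))%N)%R.
Proof.
move=> xA yA xy; rewrite inc_U1; last by rewrite !inE negb_or xy.
by rewrite pos_U1 ?inE ?negb_or ?xy // ltnn addn0 pos_U1.
Qed.

Lemma inc2' eps (A : {set W}) x y : x \notin A -> y \notin A -> x != y ->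
  incidence_sign eps (x |: A) (x |: (y |: A)) =
  ((-1) ^+ (eps (x |: A) + eps (x |: (y |: A)) +
     (pos_in A y + (enum_rank x < enum_rank y)))%N)%R.
Proof.
move=> xA yA xy; rewrite [X in incidence_sign _ _ X]swapU inc2 //; last by rewrite eq_sym.
by rewrite swapU.
Qed.

End Aux.

Theorem mainTheorem7 (V1 V2 W : finType) (K1 : {set {set V1}})
    (K2 : {set {set V2}}) (K : {set {set W}}) (k i : nat) :
  simplicial_complex K1 -> simplicial_complex K2 ->
  k_wedge_sum k K1 K2 K ->
  (2 <= k)%N -> (i <= k - 2)%N ->
  forall eps : {set W} -> bool, ~ B_balanced K i eps.
Proof.
move=> cK1 _ [phi1 [phi2 [s1 [s2 [[i1 i2 s1K s2K] [eqs _ defK]]]]]] k2 ik eps bal.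
set F := phi1 @: s1.
move: s1K; rewrite inE => /andP [s1K /eqP cs1].
have inK : forall G : {set W}, G \subset F -> G \in K.
  move=> G GF; rewrite defK inE; apply/orP; left.
  have -> : G = phi1 @: [set x in s1 | phi1 x \in G].
    apply/setP=> w; apply/idP/idP.
      move=> wG; have := subsetP GF w wG; case/imsetP=> x xs wx.
      by apply/imsetP; exists x => //; rewrite inE xs -wx wG.
    by case/imsetP=> x; rewrite inE => /andP [_ xG] ->.
  apply: imset_f; apply: (cK1 s1) => //.
  by apply/subsetP=> x; rewrite inE => /andP [].
have cF : #|F| = k.+1 by rewrite card_imset.
have : (0 < #|F|)%N by rewrite cF.
case/card_gt0P => a aF.
have cFa : #|F :\ a| = k by move: cF; rewrite (cardsD1 a F) aF add1n => -[].
have : (0 < #|F :\ a|)%N by rewrite cFa; lia.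
case/card_gt0P => b bF.
have cFb : #|F :\ a :\ b| = k.-1 by move: cFa; rewrite (cardsD1 b) bF add1n => <-.
have : (0 < #|F :\ a :\ b|)%N by rewrite cFb; lia.
case/card_gt0P => c cF'.
have cFc : #|F :\ a :\ b :\ c| = k.-2 by move: cFb; rewrite (cardsD1 c) cF' add1n => <-.
have iF : (i <= #|F :\ a :\ b :\ c|)%N by rewrite cFc; lia.
have [A [AF cA]] := ex_sub iF.
move: cF' bF; rewrite !inE => /and3P [cb ca cF'] /andP [ba bF].
have aA : a \notin A by apply/negP=> /(subsetP AF); rewrite !inE eqxx /= ?andbF.
have bA : b \notin A by apply/negP=> /(subsetP AF); rewrite !inE eqxx /= ?andbF.
have cA' : c \notin A by apply/negP=> /(subsetP AF); rewrite !inE eqxx /= ?andbF.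
have AF' : A \subset F by apply: subset_trans AF _; do 3 apply: subset_trans (subD1set _ _) _.
have ab : (a == b) = false by rewrite eq_sym (negbTE ba).
have ac : (a == c) = false by rewrite eq_sym (negbTE ca).
have bc : (b == c) = false by rewrite eq_sym (negbTE cb).
have Si : forall G : {set W}, G \subset F -> #|G| = i.+1 -> G \in S_ K i.
  by move=> G GF cG; rewrite inE inK // cG eqxx.
have Si1 : forall G : {set W}, G \subset F -> #|G| = i.+2 -> G \in S_ K i.+1.
  by move=> G GF cG; rewrite inE inK // cG eqxx.
have adjL : forall G Gb, G \in S_ K i -> Gb \in S_ K i.+1 -> G \subset Gb ->
    B_adj K i G Gb && B_adj K i Gb G.
  by move=> G Gb h1 h2 h3; rewrite /B_adj /= h1 h2 h3 /= orbT.
have sgL : forall G Gb : {set W}, #|G| = i.+1 -> #|Gb| = i.+2 ->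
    B_sign eps G Gb = incidence_sign eps G Gb /\ B_sign eps Gb G = incidence_sign eps G Gb.
  by move=> G Gb h1 h2; rewrite /B_sign h1 h2 ltnSn ltnNge leqnSn.
have c1 : forall x, x \notin A -> #|x |: A| = i.+1 by move=> x xA; rewrite cardsU1 xA cA.
have c2 : forall x y, x \notin A -> y \notin A -> x != y -> #|x |: (y |: A)| = i.+2.
  by move=> x y xA yA xy; rewrite cardsU1 c1 // !inE negb_or xy xA.
have sF1 : forall x, x \in F -> x |: A \subset F by move=> x xF; rewrite subUset sub1set xF AF'.
have sF2 : forall x y, x \in F -> y \in F -> x |: (y |: A) \subset F.
  by move=> x y xF yF; rewrite subUset sub1set xF sF1.
have ab' : a != b by rewrite ab.
have ac' : a != c by rewrite ac.
have bc' : b != c by rewrite bc.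
have [e1 e1'] := andP (adjL _ _ (Si _ (sF1 a aF) (c1 a aA)) (Si1 _ (sF2 a b aF bF) (c2 a b aA bA ab'))
   (setUS _ (subsetU1 _ _))).
have [e2 e2'] := andP (adjL _ _ (Si _ (sF1 b bF) (c1 b bA)) (Si1 _ (sF2 a b aF bF) (c2 a b aA bA ab'))
   (subsetU1 _ _)).
have [e3 e3'] := andP (adjL _ _ (Si _ (sF1 b bF) (c1 b bA)) (Si1 _ (sF2 b c bF cF') (c2 b c bA cA' bc'))
   (setUS _ (subsetU1 _ _))).
have [e4 e4'] := andP (adjL _ _ (Si _ (sF1 c cF') (c1 c cA')) (Si1 _ (sF2 b c bF cF') (c2 b c bA cA' bc'))
   (subsetU1 _ _)).
have [e5 e5'] := andP (adjL _ _ (Si _ (sF1 c cF') (c1 c cA')) (Si1 _ (sF2 a c aF cF') (c2 a c aA cA' ac'))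
   (subsetU1 _ _)).
have [e6 e6'] := andP (adjL _ _ (Si _ (sF1 a aF) (c1 a aA)) (Si1 _ (sF2 a c aF cF') (c2 a c aA cA' ac'))
   (setUS _ (subsetU1 _ _))).
have := bal [:: a |: A; a |: (b |: A); b |: A; b |: (c |: A); c |: A; a |: (c |: A)].
have -> : uniq [:: a |: A; a |: (b |: A); b |: A; b |: (c |: A); c |: A; a |: (c |: A)].
  apply: (@map_uniq _ _ (fun X : {set W} => (a \in X, b \in X, c \in X))).
  by rewrite /= !inE !eqxx (negbTE aA) (negbTE bA) (negbTE cA') ?ab ?ac ?bc
    ?(negbTE ba) ?(negbTE ca) ?(negbTE cb).
move=> /(_ isT isT).
rewrite /= e1 e2' e3 e4' e5 e6' => /(_ isT).
rewrite /cycle_sign /= !big_cons big_nil /=.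
have [-> _] := sgL _ _ (c1 a aA) (c2 a b aA bA ab').
have [_ ->] := sgL _ _ (c1 b bA) (c2 a b aA bA ab').
have [-> _] := sgL _ _ (c1 b bA) (c2 b c bA cA' bc').
have [_ ->] := sgL _ _ (c1 c cA') (c2 b c bA cA' bc').
have [-> _] := sgL _ _ (c1 c cA') (c2 a c aA cA' ac').
have [_ ->] := sgL _ _ (c1 a aA) (c2 a c aA cA' ac').
rewrite inc2' // inc2 // inc2' // inc2 // inc2 // inc2' //.
rewrite mulr1 -!exprD -signr_odd !oddD !oddb.
rewrite (rk_swap ab') (rk_swap bc') (rk_swap ac').
move: (eps _) (eps _) (eps _) (eps _) (eps _) (eps _).
move: (odd (pos_in A a)) (odd (pos_in A b)) (odd (pos_in A c)).
move: (enum_rank a < enum_rank b)%N (enum_rank b < enum_rank c)%N (enum_rank a < enum_rank c)%N.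
by do !case.
Qed.
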